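(* Let $(W,S)$ be a Coxeter system of rank $n$ with set of reflections $T$, $(s_1,\dots,s_n)$ an ordering of $S$, $h=s_1\cdots s_n$, and let $\Psi:\mathrm{Art}(W,S)\to\mathrm{Art}^*(W,T,h)$ be the group morphism with $\bar s_i\mapsto\{s_i\}$. If $\Psi$ is an isomorphism, then $(W,(s_1,\dots,s_n))$ is well-stabilized.
   Context: A Coxeter system $(W,S)$: $W=\langle S\mid (ss')^{m(s,s')}=1\text{ whenever } m(s,s')\neq\infty\rangle$ with $m$ symmetric, $m(s,s)=1$, $m(s,s')\in\{2,3,\dots,\infty\}$ for $s\neq s'$; $T$ is the set of conjugates of elements of $S$. For $a\in W$: $\ell_T(a)$ is the minimal $k$ with $a=t_1\cdots t_k$, $t_i\in T$; $\mathrm{Red}_T(a)$ is the set of such tuples of length $\ell_T(a)$; $a\le_T b$ iff $\ell_T(a)+\ell_T(a^{-1}b)=\ell_T(b)$; $[1,h]_T=\{a:a\le_T h\}$. $\mathrm{Art}(W,S)$ is generated by $\bar s_1,\dots,\bar s_n$ subject to $\bar s_i\bar s_j\bar s_i\cdots=\bar s_j\bar s_i\bar s_j\cdots$ (each side with $m(s_i,s_j)$ factors) for $i<j$ with $m(s_i,s_j)\neq\infty$. $\mathrm{Art}^*(W,T,h)$ is generated by symbols $\{t\}$, $t\in T\cap[1,h]_T$, subject to $\{t_1\}\cdots\{t_k\}=\{t'_1\}\cdots\{t'_k\}$ for all $a\in[1,h]_T$ and $(t_1,\dots,t_k),(t'_1,\dots,t'_k)\in\mathrm{Red}_T(a)$;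 $\Psi$ is a well-defined morphism. The braid group $B_n$ acts on $G^n$ by the Hurwitz action $\sigma_i\cdot(g_1,\dots,g_n)=(g_1,\dots,g_{i-1},g_ig_{i+1}g_i^{-1},g_i,g_{i+2},\dots,g_n)$. $(W,(s_1,\dots,s_n))$ is well-stabilized if the stabilizer in $B_n$ of $(s_1,\dots,s_n)\in W^n$ equals the stabilizer of $(\bar s_1,\dots,\bar s_n)\in\mathrm{Art}(W,S)^n$. *)

(* Defs.v *)
From mathcomp Require Import all_boot.
Set Implicit Arguments. Unset Strict Implicit. Unset Printing Implicit Defensive.

(* A word over generators X: letters (x, true) = x, (x, false) = x^-1. *)
Definition fword (X : Type) := seq (X * bool).

Definition finv (X : Type) (w : fword X) : fword X :=
  rev (map (fun p => (p.1, ~~ p.2)) w).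

Inductive pres_eq (X : Type) (R : fword X -> fword X -> Prop) :
    fword X -> fword X -> Prop :=
| pres_refl u : pres_eq R u u
| pres_sym u v : pres_eq R u v -> pres_eq R v u
| pres_trans u v w : pres_eq R u v -> pres_eq R v w -> pres_eq R u w
| pres_free u v x b : pres_eq R (u ++ (x, b) :: (x, ~~ b) :: v) (u ++ v)
| pres_rel u v l r : R l r -> pres_eq R (u ++ l ++ v) (u ++ r ++ v).

(* m i j = None encodes m(s_i,s_j) = infinity. *)
Definition coxeter_matrix (n : nat) (m : 'I_n -> 'I_n -> option nat) : Prop :=
  (forall i j, m i j = m j i) /\ (forall i, m i i = Some 1) /\
  (forall i j k, i != j -> m i j = Some k -> 2 <= k).

Definition cox_rel (n : nat) (m : 'I_n -> 'I_n -> option nat)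
    (l r : fword 'I_n) : Prop :=
  exists i j k, m i j = Some k /\
    l = flatten (nseq k [:: (i, true); (j, true)]) /\ r = [::].

Definition cox_eq (n : nat) (m : 'I_n -> 'I_n -> option nat) :=
  pres_eq (cox_rel m).

Definition alt (n : nat) (i j : 'I_n) (k : nat) : fword 'I_n :=
  mkseq (fun t => (if odd t then j else i, true)) k.

Definition art_rel (n : nat) (m : 'I_n -> 'I_n -> option nat)
    (l r : fword 'I_n) : Prop :=
  exists (i j : 'I_n) k, (i < j)%N /\ m i j = Some k /\
    l = alt i j k /\ r = alt j i k.

Definition art_eq (n : nat) (m : 'I_n -> 'I_n -> option nat) :=
  pres_eq (art_rel m).

Section Refl.
Variables (n : nat) (m : 'I_n -> 'I_n -> option nat).

Definition is_refl (w : fword 'I_n) : Prop :=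
  exists (x : fword 'I_n) (i : 'I_n), cox_eq m (x ++ (i, true) :: finv x) w.

Definition T_decomp (a : fword 'I_n) (ts : seq (fword 'I_n)) : Prop :=
  (forall k, k < size ts -> is_refl (nth [::] ts k)) /\
  cox_eq m (flatten ts) a.

Definition T_len (a : fword 'I_n) (k : nat) : Prop :=
  (exists ts, size ts = k /\ T_decomp a ts) /\
  (forall ts, T_decomp a ts -> k <= size ts).

Definition red_T (a : fword 'I_n) (ts : seq (fword 'I_n)) : Prop :=
  T_decomp a ts /\ (forall ts', T_decomp a ts' -> size ts <= size ts').

Definition le_T (a b : fword 'I_n) : Prop :=
  exists k1 k2 k3, T_len a k1 /\ T_len (finv a ++ b) k2 /\ T_len b k3 /\
    k1 + k2 = k3.

Definition cox_h : fword 'I_n := map (fun i => (i, true)) (enum 'I_n).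

(* generators {t}, t in T cap [1,h]_T (t given by a representative word;
   representatives of the same element of W are identified by relations) *)
Definition dgen := {u : fword 'I_n | is_refl u /\ le_T u cox_h}.

Definition dual_rel (l r : fword dgen) : Prop :=
  (exists g g' : dgen, cox_eq m (proj1_sig g) (proj1_sig g') /\
     l = [:: (g, true)] /\ r = [:: (g', true)]) \/
  (exists (a : fword 'I_n) (gs gs' : seq dgen), le_T a cox_h /\
     red_T a (map (@proj1_sig _ _) gs) /\ red_T a (map (@proj1_sig _ _) gs') /\
     l = map (fun g => (g, true)) gs /\ r = map (fun g => (g, true)) gs').

Definition dual_eq := pres_eq dual_rel.

(* Psi : Art(W,S) -> Art*(W,T,h), s_i |-> {s_i}: v represents Psi(u) *)
Definition psi_rel (u : fword 'I_n) (v : fword dgen) : Prop :=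
  map (fun p => (proj1_sig p.1, p.2)) v = map (fun p => ([:: (p.1, true)], p.2)) u.

Definition psi_iso : Prop :=
  (forall u u' v v', psi_rel u v -> psi_rel u' v' -> dual_eq v v' -> art_eq m u u') /\
  (forall v, exists u v', psi_rel u v' /\ dual_eq v v').

End Refl.

(* braid letter (i, true) = sigma_{i+1}, (i, false) = sigma_{i+1}^-1 (0-based) *)
Definition hstep (X : Type) (p : nat * bool) (gs : seq (fword X)) : seq (fword X) :=
  let i := p.1 in
  let gi := nth [::] gs i in
  let gj := nth [::] gs i.+1 in
  if p.2 then set_nth [::] (set_nth [::] gs i (gi ++ gj ++ finv gi)) i.+1 gi
  else set_nth [::] (set_nth [::] gs i gj) i.+1 (finv gj ++ gi ++ gj).

Definition hact (X : Type) (beta : seq (nat * bool)) (gs : seq (fword X)) :=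
  foldr (@hstep X) gs beta.

Definition tuple_eq (X : Type) (E : fword X -> fword X -> Prop)
    (gs gs' : seq (fword X)) : Prop :=
  size gs = size gs' /\
  forall k, k < size gs -> E (nth [::] gs k) (nth [::] gs' k).

Definition sgen (n : nat) : seq (fword 'I_n) :=
  map (fun i => [:: (i, true)]) (enum 'I_n).

Definition well_stabilized (n : nat) (m : 'I_n -> 'I_n -> option nat) : Prop :=
  forall beta : seq (nat * bool), all (fun p => p.1.+1 < n) beta ->
    (tuple_eq (cox_eq m) (hact beta (sgen n)) (sgen n) <->
     tuple_eq (art_eq m) (hact beta (sgen n)) (sgen n)).

(* Main.v *)
From mathcomp Require Import all_boot all_algebra all_field.
From mathcomp Require Import ring zify.
Require Import Defs.
Set Implicit Arguments. Unset Strict Implicit. Unset Printing Implicit Defensive.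

Section Pres.
Variables (X : Type) (R : fword X -> fword X -> Prop).
Notation PE := (pres_eq R).

Lemma pe_ctx a b u v : PE u v -> PE (a ++ u ++ b) (a ++ v ++ b).
Proof.
elim=> {u v}.
- by move=> u; apply: pres_refl.
- by move=> u v _ H; apply: pres_sym.
- by move=> u v w _ H1 _ H2; apply: pres_trans H1 H2.
- move=> u v x c; move: (pres_free R (a ++ u) (v ++ b) x c).
  by rewrite -!catA.
- move=> u v l r Hr; move: (pres_rel (a ++ u) (v ++ b) Hr).
  by rewrite -!catA.
Qed.

Lemma pe_cat u u' v v' : PE u u' -> PE v v' -> PE (u ++ v) (u' ++ v').
Proof.
move=> H1 H2; apply: (@pres_trans _ _ _ (u' ++ v)).
  by move: (pe_ctx [::] v H1).
by move: (pe_ctx u' [::] H2); rewrite !cats0.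
Qed.

Lemma finv_cat (u v : fword X) : finv (u ++ v) = finv v ++ finv u.
Proof. by rewrite /finv map_cat rev_cat. Qed.

Lemma finv_finv (u : fword X) : finv (finv u) = u.
Proof.
rewrite /finv map_rev revK -map_comp.
by elim: u => [|[x b] u IH] //=; rewrite negbK IH.
Qed.

Lemma finv_cons (p : X * bool) u : finv (p :: u) = finv u ++ [:: (p.1, ~~ p.2)].
Proof. by rewrite /finv /= rev_cons cats1. Qed.

Lemma pe_invr u : PE (u ++ finv u) [::].
Proof.
elim: u => [|[x b] u IH] /=; first exact: pres_refl.
rewrite finv_cons /= catA.
apply: (@pres_trans _ _ _ ([:: (x, b)] ++ [::] ++ [:: (x, ~~ b)])).
  exact: (pe_ctx [:: (x, b)] [:: (x, ~~ b)] IH).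
by move: (pres_free R [::] [::] x b).
Qed.

Lemma pe_invl u : PE (finv u ++ u) [::].
Proof. by move: (pe_invr (finv u)); rewrite finv_finv. Qed.

Lemma pe_finv u v : PE u v -> PE (finv u) (finv v).
Proof.
move=> H.
apply: (@pres_trans _ _ _ (finv u ++ v ++ finv v)).
  apply: pres_sym; move: (pe_cat (pres_refl R (finv u)) (pe_invr v)).
  by rewrite cats0.
apply: (@pres_trans _ _ _ (finv u ++ u ++ finv v)).
  by apply: pe_cat; [apply: pres_refl | apply: pe_cat => //; [apply: pres_sym | apply: pres_refl]].
rewrite catA.
by move: (pe_cat (pe_invl u) (pres_refl R (finv v))).
Qed.

Lemma pe_cancel_l u w : PE (u ++ finv u ++ w) w.
Proof. by rewrite catA; move: (pe_cat (pe_invr u) (pres_refl R w)). Qed.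

Lemma pe_cancel_l' u w : PE (finv u ++ u ++ w) w.
Proof. by rewrite catA; move: (pe_cat (pe_invl u) (pres_refl R w)). Qed.

End Pres.

Lemma pe_cancel_r (X : Type) (R : fword X -> fword X -> Prop) u w :
  pres_eq R (w ++ finv u ++ u) w.
Proof. by move: (pe_cat (pres_refl R w) (pe_invl R u)); rewrite cats0. Qed.

Section TT.
Variables (n : nat) (m : 'I_n -> 'I_n -> option nat).
Notation CE := (cox_eq m).
Notation W := (fword 'I_n).

Definition allrefl (ts : seq W) := forall k, k < size ts -> is_refl m (nth [::] ts k).

Lemma allrefl_cat s t : allrefl (s ++ t) <-> allrefl s /\ allrefl t.
Proof.
split.
  move=> H; split=> k Hk.
    by move: (H k); rewrite size_cat nth_cat Hk; apply; apply: ltn_addr.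
  move: (H (size s + k)); rewrite size_cat nth_cat ltn_add2l addKn.
  have -> : (size s + k < size s) = false by rewrite ltnNge leq_addr.
  by apply.
case=> Hs Ht k; rewrite size_cat nth_cat; case: (ltnP k (size s)) => Hk1 Hk2; first exact: Hs.
by apply: Ht; rewrite -(ltn_add2l (size s)) subnKC.
Qed.

Lemma allrefl_cons t s : allrefl (t :: s) <-> is_refl m t /\ allrefl s.
Proof.
split.
  by move=> H; split; [apply: (H 0) | move=> k Hk; apply: (H k.+1)].
by case=> H1 H2 [|k] //= Hk; apply: H2.
Qed.

Lemma is_refl_eq u v : CE u v -> is_refl m u -> is_refl m v.
Proof. by move=> H [x [i Hx]]; exists x, i; apply: pres_trans Hx H. Qed.

Lemma is_refl_conj y t : is_refl m t -> is_refl m (y ++ t ++ finv y).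
Proof.
case=> x [i Hx]; exists (y ++ x), i.
rewrite finv_cat -catA /=.
have -> : y ++ x ++ (i, true) :: finv x ++ finv y = y ++ (x ++ (i, true) :: finv x) ++ finv y.
  by rewrite -catA.
by apply: pe_ctx.
Qed.

Lemma T_decomp_eq a b ts : CE a b -> T_decomp m a ts -> T_decomp m b ts.
Proof. by move=> H [H1 H2]; split => //; apply: pres_trans H2 H. Qed.

Lemma T_decomp_cat a b ts ts' :
  T_decomp m a ts -> T_decomp m b ts' -> T_decomp m (a ++ b) (ts ++ ts').
Proof.
case=> H1 H2 [H3 H4]; split.
  by apply/allrefl_cat.
by rewrite flatten_cat; apply: pe_cat.
Qed.

Lemma T_decomp_self ts : allrefl ts -> T_decomp m (flatten ts) ts.
Proof. by move=> H; split => //; apply: pres_refl. Qed.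

Lemma flatten_conj a ts :
  CE (flatten (map (fun t => finv a ++ t ++ a) ts)) (finv a ++ flatten ts ++ a).
Proof.
elim: ts => [|t ts IH] /=.
  by apply: pres_sym; apply: pe_invl.
apply: pres_trans (pe_cat (pres_refl _ (finv a ++ t ++ a)) IH) _.
rewrite -!catA.
apply: pe_cat; first exact: pres_refl.
apply: pe_cat; first exact: pres_refl.
exact: pe_cancel_l.
Qed.

Definition good (G : seq W) := size G = n /\ T_decomp m (cox_h n) G.

Hypothesis KL : forall ts, T_decomp m (cox_h n) ts -> n <= size ts.

Lemma block_min G pre mid post : good G -> G = pre ++ mid ++ post ->
  forall ts, T_decomp m (flatten mid) ts -> size mid <= size ts.
Proof.
move=> [Hs [HR HF]] HG ts Hts.
move: HR; rewrite HG => /allrefl_cat [Hp /allrefl_cat [Hm Hq]].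
have H : T_decomp m (cox_h n) (pre ++ ts ++ post).
  apply: (@T_decomp_eq (flatten (pre ++ mid ++ post))); first by rewrite -HG.
  rewrite !flatten_cat.
  apply: T_decomp_cat; first exact: T_decomp_self.
  apply: T_decomp_cat => //; exact: T_decomp_self.
move: (KL H) Hs; rewrite HG !size_cat => H1 Hs.
have : size pre + (size mid + size post) <= size pre + (size ts + size post) by rewrite Hs.
by rewrite leq_add2l leq_add2r.
Qed.

Lemma block_refl G pre mid post : good G -> G = pre ++ mid ++ post -> allrefl mid.
Proof.
move=> [Hs [HR HF]] HG.
by move: HR; rewrite HG => /allrefl_cat [Hp /allrefl_cat [Hm Hq]].
Qed.

Lemma block_redT G pre mid post a : good G -> G = pre ++ mid ++ post ->
  CE (flatten mid) a -> red_T m a mid.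
Proof.
move=> Hg HG Ha; split.
  by apply: T_decomp_eq Ha _; apply: T_decomp_self; apply: block_refl Hg HG.
move=> ts Hts; apply: (block_min Hg HG).
by apply: T_decomp_eq Hts; apply: pres_sym.
Qed.

Lemma block_Tlen G pre mid post : good G -> G = pre ++ mid ++ post ->
  T_len m (flatten mid) (size mid).
Proof.
move=> Hg HG; split.
  by exists mid; split => //; apply: T_decomp_self; apply: block_refl Hg HG.
exact: block_min Hg HG.
Qed.

Lemma block_leT G pre mid post : good G -> G = pre ++ mid ++ post ->
  le_T m (flatten mid) (cox_h n).
Proof.
move=> Hg HG; have [Hs [HR HF]] := Hg.
move: (HR); rewrite HG => /allrefl_cat [Hp /allrefl_cat [Hm Hq]].
set a := flatten mid.
exists (size mid), (size pre + size post), n.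
split; first exact: block_Tlen Hg HG.
split; last first.
  split; last by move: Hs; rewrite HG !size_cat addnCA.
  by split; [exists G | exact: KL].
split.
  exists (map (fun t => finv a ++ t ++ a) pre ++ post); split.
    by rewrite size_cat size_map.
  split.
    apply/allrefl_cat; split => // k; rewrite size_map => Hk.
    rewrite (nth_map [::]) //.
    by move: (is_refl_conj (finv a) (Hp k Hk)); rewrite finv_finv.
  rewrite flatten_cat.
  apply: pres_trans (pe_cat (flatten_conj a pre) (pres_refl _ _)) _.
  rewrite -!catA; apply: pe_cat; first exact: pres_refl.
  apply: pres_trans HF.
  by rewrite HG !flatten_cat; apply: pres_refl.
move=> ts Hts.
have H : T_decomp m (cox_h n) (mid ++ ts).
  apply: (@T_decomp_eq (a ++ finv a ++ (cox_h n))); first exact: pe_cancel_l.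
  apply: T_decomp_cat => //; exact: T_decomp_self.
move: (KL H) Hs; rewrite HG !size_cat => H1 Hs.
have : size mid + (size pre + size post) <= size mid + size ts by rewrite addnCA Hs.
by rewrite leq_add2l.
Qed.

End TT.

Section Easy.
Variables (n : nat) (m : 'I_n -> 'I_n -> option nat).
Hypothesis Hm : coxeter_matrix m.
Notation CE := (cox_eq m).

Definition pos (w : fword 'I_n) : fword 'I_n := map (fun p => (p.1, true)) w.

Lemma cox_inv_letter x : CE [:: (x, false)] [:: (x, true)].
Proof.
apply: (@pres_trans _ _ _ ([:: (x, false)] ++ [:: (x, true); (x, true)] ++ [::])).
  apply: pres_sym.
  have R : cox_rel m [:: (x, true); (x, true)] [::].
    by exists x, x, 1; rewrite (Hm.2.1 x).
  exact: (pres_rel [:: (x, false)] [::] R).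
by move: (pres_free (cox_rel m) [::] [:: (x, true)] x false).
Qed.

Lemma cox_pos w : CE w (pos w).
Proof.
elim: w => [|[x b] w IH] /=; first exact: pres_refl.
rewrite -cat1s -[(x, true) :: _]cat1s.
apply: pe_cat => //; case: b; first exact: pres_refl.
exact: cox_inv_letter.
Qed.

Lemma alt_S (i j : 'I_n) k : alt i j k.+1 = (i, true) :: alt j i k.
Proof.
rewrite /alt /mkseq /=; congr (_ :: _).
have -> : iota 1 k = map (addn 1) (iota 0 k) by rewrite -iotaDl.
by rewrite -map_comp; apply: eq_map => t /=; case: (odd t).
Qed.

Lemma flatten_nseq_rcons (i j : 'I_n) k :
  flatten (nseq k [:: (j, true); (i, true)]) ++ [:: (j, true)] =
  (j, true) :: flatten (nseq k [:: (i, true); (j, true)]).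
Proof. by elim: k => [|k IH] //=; rewrite IH. Qed.

Lemma alt_rev (i j : 'I_n) k :
  alt i j k ++ rev (alt j i k) = flatten (nseq k [:: (i, true); (j, true)]).
Proof.
elim: k i j => [|k IH] i j //.
rewrite !alt_S rev_cons -cats1 /= catA IH.
by rewrite flatten_nseq_rcons.
Qed.

Lemma pos_alt (i j : 'I_n) k : pos (alt i j k) = alt i j k.
Proof. by rewrite /pos /alt /mkseq -map_comp. Qed.

Lemma pos_finv w : pos (finv w) = rev (pos w).
Proof. by rewrite /pos /finv map_rev -map_comp. Qed.

Lemma art_cox_rel l r : art_rel m l r -> CE l r.
Proof.
case=> i [j [k [_ [Hij [-> ->]]]]].
set u := alt i j k; set v := alt j i k.
have S1 : CE (u ++ finv v) [::].
  apply: pres_trans (cox_pos _) _.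
  rewrite /pos map_cat -/(pos (finv v)) pos_finv -/(pos u) /u /v !pos_alt alt_rev.
  have R : cox_rel m (flatten (nseq k [:: (i, true); (j, true)])) [::] by exists i, j, k.
  by move: (pres_rel [::] [::] R); rewrite /= cats0.
apply: (@pres_trans _ _ _ ((u ++ finv v) ++ v)).
  rewrite -catA; apply: pres_sym.
  by move: (pe_cat (pres_refl _ u) (pe_invl (cox_rel m) v)); rewrite cats0.
exact: (pe_cat S1 (pres_refl _ v)).
Qed.

Lemma art_cox u v : art_eq m u v -> CE u v.
Proof.
elim=> {u v}.
- by move=> u; apply: pres_refl.
- by move=> u v _ H; apply: pres_sym.
- by move=> u v w _ H1 _ H2; apply: pres_trans H1 H2.
- by move=> u v x b; apply: pres_free.
- by move=> u v l r Hr; apply: pe_ctx; apply: art_cox_rel.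
Qed.

End Easy.

Lemma hstep_split (X : Type) (pre : seq (fword X)) a b post c :
  hstep (size pre, c) (pre ++ a :: b :: post) =
  pre ++ (if c then (a ++ b ++ finv a) :: a :: post else b :: (finv b ++ a ++ b) :: post).
Proof.
elim: pre => [|x pre IH]; first by case: c.
move: IH; rewrite /hstep /=.
by case: c => /= ->.
Qed.

Lemma split_at (T : Type) (x0 : T) (s : seq T) i : i.+1 < size s ->
  s = take i s ++ nth x0 s i :: nth x0 s i.+1 :: drop i.+2 s.
Proof.
move=> H.
rewrite -[s in LHS](cat_take_drop i) (drop_nth x0) ?(ltnW H) //.
by rewrite (drop_nth x0).
Qed.

Lemma split_ex (T : Type) (s : seq T) i : i.+1 < size s ->
  exists pre a b post, s = pre ++ a :: b :: post /\ size pre = i.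
Proof.
case: s => [//|x s'] H.
exists (take i (x :: s')), (nth x (x :: s') i), (nth x (x :: s') i.+1), (drop i.+2 (x :: s')).
split; first exact: split_at.
by rewrite size_take ifT // (ltnW H).
Qed.

Section Hard.
Variables (n : nat) (m : 'I_n -> 'I_n -> option nat).
Hypothesis KLh : forall ts, T_decomp m (cox_h n) ts -> n <= size ts.
Notation CE := (cox_eq m).
Notation D := (dgen m).
Notation DE := (@dual_eq n m).

Lemma refl_single i : is_refl m [:: (i, true)].
Proof. by exists [::], i; apply: pres_refl. Qed.

Lemma flatten_sgen : flatten (sgen n) = cox_h n.
Proof. by rewrite /sgen /cox_h; elim: (enum 'I_n) => //= i s ->. Qed.

Lemma nth_sgen (i : 'I_n) : nth [::] (sgen n) i = [:: (i, true)].
Proof. by rewrite /sgen (nth_map i) ?size_enum_ord ?ltn_ord // nth_ord_enum. Qed.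

Lemma good_sgen : good m (sgen n).
Proof.
split; first by rewrite size_map size_enum_ord.
split; last by rewrite flatten_sgen; apply: pres_refl.
move=> k; rewrite size_map size_enum_ord => Hk.
by move: (nth_sgen (Ordinal Hk)) => /= ->; apply: refl_single.
Qed.

Lemma good_leT G k : good m G -> k < size G -> le_T m (nth [::] G k) (cox_h n).
Proof.
move=> Hg Hk.
have E : G = take k G ++ [:: nth [::] G k] ++ drop k.+1 G.
  by rewrite /= -(drop_nth [::]) // cat_take_drop.
by move: (block_leT KLh Hg E); rewrite /= cats0.
Qed.

Lemma leT_single i : le_T m [:: (i, true)] (cox_h n).
Proof.
rewrite -nth_sgen; apply: good_leT good_sgen _.
by rewrite size_map size_enum_ord.
Qed.

Definition gi i : D := exist _ [:: (i, true)] (conj (refl_single i) (leT_single i)).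
Definition psimap (u : fword 'I_n) : fword D := map (fun p => (gi p.1, p.2)) u.

Lemma psimap_finv u : psimap (finv u) = finv (psimap u).
Proof. by rewrite /psimap /finv map_rev -!map_comp. Qed.

Lemma psimap_cat u v : psimap (u ++ v) = psimap u ++ psimap v.
Proof. exact: map_cat. Qed.

Lemma psi_psimap u : psi_rel u (psimap u).
Proof. by rewrite /psi_rel /psimap -map_comp. Qed.

Definition R2 (u : fword 'I_n) (g : D) := CE (sval g) u /\ DE (psimap u) [:: (g, true)].

Fixpoint F2 (us : seq (fword 'I_n)) (gs : seq D) : Prop :=
  match us, gs with
  | [::], [::] => True
  | u :: us', g :: gs' => R2 u g /\ F2 us' gs'
  | _, _ => False
  end.

Lemma F2_size us gs : F2 us gs -> size us = size gs.
Proof. by elim: us gs => [|u us IH] [|g gs] //= [_ /IH ->]. Qed.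

Lemma F2_cat p p' s s' : size p = size p' -> F2 (p ++ s) (p' ++ s') <-> F2 p p' /\ F2 s s'.
Proof.
elim: p p' => [|u p IH] [|g p'] //= Hs; first by tauto.
case: Hs => /(IH p') [H1 H2]; tauto.
Qed.

Lemma F2_nth us gs k : F2 us gs -> k < size us -> exists g, R2 (nth [::] us k) g.
Proof.
elim: us gs k => [|u us IH] [|g gs] [|k] //=; first by case=> H _ _; exists g.
by case=> _ H Hk; apply: IH H Hk.
Qed.

Definition Inv us := exists gs, F2 us gs /\ good m (map sval gs).


Lemma step_ok pre a b post preG ga gb postG c :
  size pre = size preG ->
  F2 (pre ++ a :: b :: post) (preG ++ ga :: gb :: postG) ->
  good m (map sval (preG ++ ga :: gb :: postG)) ->
  Inv (hstep (size pre, c) (pre ++ a :: b :: post)).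
Proof.
move=> Hs HF Hg; rewrite hstep_split.
move/(F2_cat _ _ Hs): HF => [Hp /= [[Ha1 Ha2] [[Hb1 Hb2] Hq]]].
set A := sval ga; set B := sval gb.
set P := map sval preG; set Q := map sval postG.
have EG : map sval (preG ++ ga :: gb :: postG) = P ++ [:: A; B] ++ Q by rewrite map_cat.
have [Hsz [HR HFl]] := Hg.
move: (HR); rewrite EG => /allrefl_cat [HRp /allrefl_cat [HRm HRq]].
have HRa : is_refl m A by apply: (HRm 0).
have HRb : is_refl m B by apply: (HRm 1).
have leAB : le_T m (A ++ B ++ [::]) (cox_h n) by apply: (block_leT KLh Hg EG).
have redAB : red_T m (A ++ B ++ [::]) [:: A; B].
  by apply: (block_redT KLh Hg EG); apply: pres_refl.
have newgood : forall x y, is_refl m x -> is_refl m y -> CE (x ++ y) (A ++ B) ->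
    good m (P ++ [:: x; y] ++ Q).
  move=> x y Hx Hy Cxy; split.
    by move: Hsz; rewrite EG !size_cat.
  split.
    apply/allrefl_cat; split => //; apply/allrefl_cat; split => //.
    by apply/allrefl_cons; split => //; apply/allrefl_cons.
  apply: pres_trans HFl; rewrite EG !flatten_cat.
  apply: pe_cat; first exact: pres_refl.
  rewrite /= !catA; apply: pe_cat => //; last exact: pres_refl.
  by rewrite !cats0.
case: c.
- set w := A ++ B ++ finv A.
  have Hw : is_refl m w by apply: is_refl_conj.
  have Cw : CE (w ++ A) (A ++ B).
    rewrite /w -!catA; apply: pe_cat; first exact: pres_refl.
    exact: pe_cancel_r.
  have Hg2 := newgood w A Hw HRa Cw.
  have lw : le_T m w (cox_h n).
    have E2 : P ++ [:: w; A] ++ Q = P ++ [:: w] ++ (A :: Q) by [].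
    by move: (block_leT KLh Hg2 E2); rewrite /= cats0.
  pose g' : D := exist _ w (conj Hw lw).
  exists (preG ++ g' :: ga :: postG); split; last by rewrite map_cat.
  apply/F2_cat => //; split => //=; split; last by split.
  split.
    apply: pe_cat => //; apply: pe_cat => //.
    exact: pe_finv.
  rewrite !psimap_cat psimap_finv.
  apply: pres_trans (pe_cat Ha2 (pe_cat Hb2 (pe_finv Ha2))) _ => /=.
  have Rel : @dual_rel n m [:: (ga, true); (gb, true)] [:: (g', true); (ga, true)].
    right; exists (A ++ B ++ [::]), [:: ga; gb], [:: g'; ga].
    split => //; split => //; split => //.
    have E2 : P ++ [:: w; A] ++ Q = P ++ [:: w; A] ++ Q by [].
    apply: (block_redT KLh Hg2 E2).
    by rewrite /= !cats0.
  apply: pres_trans (pres_rel [::] [:: (ga, false)] Rel) _.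
  exact: (pres_free _ [:: (g', true)] [::] ga true).
- set w := finv B ++ A ++ B.
  have Hw : is_refl m w by move: (is_refl_conj (finv B) HRa); rewrite finv_finv.
  have Cw : CE (B ++ w) (A ++ B) by apply: pe_cancel_l.
  have Hg2 := newgood B w HRb Hw Cw.
  have lw : le_T m w (cox_h n).
    have E2 : P ++ [:: B; w] ++ Q = (P ++ [:: B]) ++ [:: w] ++ Q by rewrite -catA.
    by move: (block_leT KLh Hg2 E2); rewrite /= cats0.
  pose g' : D := exist _ w (conj Hw lw).
  exists (preG ++ gb :: g' :: postG); split; last by rewrite map_cat.
  apply/F2_cat => //; split => //=; split; first by split.
  split; last by [].
  split.
    apply: pe_cat; first exact: pe_finv.
    by apply: pe_cat.
  rewrite !psimap_cat psimap_finv.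
  apply: pres_trans (pe_cat (pe_finv Hb2) (pe_cat Ha2 Hb2)) _ => /=.
  have Rel : @dual_rel n m [:: (ga, true); (gb, true)] [:: (gb, true); (g', true)].
    right; exists (A ++ B ++ [::]), [:: ga; gb], [:: gb; g'].
    split => //; split => //; split => //.
    have E2 : P ++ [:: B; w] ++ Q = P ++ [:: B; w] ++ Q by [].
    apply: (block_redT KLh Hg2 E2).
    by rewrite /= !cats0.
  apply: pres_trans (pres_rel [:: (gb, false)] [::] Rel) _.
  exact: (pres_free _ [::] [:: (g', true)] gb false).
Qed.


Lemma F2_init s : F2 (map (fun i => [:: (i, true)]) s) (map gi s).
Proof.
elim: s => [|i s IH] //=; split => //; split; first exact: pres_refl.
exact: pres_refl.
Qed.

Lemma hact_inv beta : all (fun p => p.1.+1 < n) beta -> Inv (hact beta (sgen n)).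
Proof.
elim: beta => [|[i c] beta IH] /=.
  move=> _; exists (map gi (enum 'I_n)); split; first exact: F2_init.
  by rewrite -map_comp; apply: good_sgen.
case/andP => /= Hi /IH [gs [HF Hg]].
set U := hact beta (sgen n) in HF *.
have HsU : size U = size gs by apply: F2_size.
have Hgs : size gs = n by move: Hg => [H _]; move: H; rewrite size_map.
have H1 : i.+1 < size U by rewrite HsU Hgs.
have H2 : i.+1 < size gs by rewrite Hgs.
have [pre [a [b [post [EU Hp]]]]] := split_ex H1.
have [preG [ga [gb [postG [EG HpG]]]]] := split_ex H2.
rewrite EU -Hp; apply: (@step_ok _ _ _ _ preG ga gb postG).
- by rewrite Hp HpG.
- by rewrite -EU -EG.
- by rewrite -EG.
Qed.

End Hard.

Section Rep.
Import GRing.Theory.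
Variables (n : nat) (m : 'I_n -> 'I_n -> option nat).
Local Open Scope ring_scope.
Notation N := (n + n)%N.

Definition lam (k : nat) : algC := projT1 (C_prim_root_exists (ltn0Sn k.-1)).
Lemma lamP k : (k.-1.+1).-primitive_root (lam k).
Proof. by rewrite /lam; case: C_prim_root_exists. Qed.

Definition cval k : algC := 2 + lam k + (lam k)^-1.

Definition Aco (i j : 'I_n) : algC :=
  if i == j then 2 else
  match m i j with
  | Some k => if odd k then (if (i < j)%N then 1 else cval k) else 0
  | None => 0
  end.

Definition alpha (i : 'I_n) : 'cV[algC]_N := col_mx (delta_mx i 0) 0.
Definition fr (i : 'I_n) : 'rV[algC]_N := row_mx (\row_j Aco i j) (delta_mx 0 i).
Definition sig (i : 'I_n) : 'M[algC]_N := 1%:M - alpha i *m fr i.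
Definition rho (w : fword 'I_n) : 'M[algC]_N := foldr (fun p M => sig p.1 *m M) 1%:M w.

Lemma fr_alpha i j : fr i *m alpha j = (Aco i j)%:M.
Proof.
rewrite /fr /alpha mul_row_col mulmx0 addr0.
apply/matrixP => a b; rewrite !ord1 !mxE (bigD1 j) //= big1 => [|k /negbTE Hk].
  by rewrite !mxE !eqxx /= mulr1 addr0.
by rewrite !mxE Hk /= mulr0.
Qed.

Lemma rho_cat u v : rho (u ++ v) = rho u *m rho v.
Proof. by elim: u => [|p u IH] /=; rewrite ?mul1mx // IH mulmxA. Qed.

Lemma sig_alpha i j : sig i *m alpha j = alpha j - Aco i j *: alpha i.
Proof. by rewrite /sig mulmxBl mul1mx -mulmxA fr_alpha mul_mx_scalar. Qed.

Lemma Aco_ii i : Aco i i = 2.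
Proof. by rewrite /Aco eqxx. Qed.

Lemma sig2 i : sig i *m sig i = 1%:M.
Proof.
have XX : (alpha i *m fr i) *m (alpha i *m fr i) = 2 *: (alpha i *m fr i).
  by rewrite mulmxA -(mulmxA (alpha i)) fr_alpha Aco_ii mul_mx_scalar scalemxAl.
rewrite /sig mulmxBr mulmx1 !mulmxBl !mul1mx XX.
move: (alpha i *m fr i) => X.
apply/matrixP => a b; rewrite !mxE; ring.
Qed.


Definition mpow (M : 'M[algC]_N) k := iter k (mulmx M) 1%:M.
Fixpoint gsum (M : 'M[algC]_N) k : 'M[algC]_N :=
  if k is k'.+1 then 1%:M + M *m gsum M k' else 0.
Fixpoint geo (c : algC) k : algC := if k is k'.+1 then 1 + c * geo c k' else 0.

Lemma gsum_pow M k : gsum M k *m (M - 1%:M) = mpow M k - 1%:M.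
Proof.
elim: k => [|k IH] /=; first by rewrite mul0mx subrr.
rewrite mulmxDl mul1mx -mulmxA IH mulmxBr mulmx1.
by rewrite addrC -addrA (addrA (- M)) addNr add0r.
Qed.

Lemma gsum_eig M k c (w : 'cV[algC]_N) : M *m w = c *: w -> gsum M k *m w = geo c k *: w.
Proof.
move=> Hw; elim: k => [|k IH] /=; first by rewrite mul0mx scale0r.
by rewrite mulmxDl mul1mx -mulmxA IH -scalemxAr Hw scalerA scalerDl scale1r mulrC.
Qed.

Lemma geo_eq c k : geo c k * (c - 1) = c ^+ k - 1.
Proof.
elim: k => [|k IH] /=; first by rewrite mul0r expr0 subrr.
have -> : (1 + c * geo c k) * (c - 1) = (c - 1) + c * (geo c k * (c - 1)) by ring.
by rewrite IH exprS; ring.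
Qed.

Lemma geo0 c k : c ^+ k = 1 -> c != 1 -> geo c k = 0.
Proof.
move=> H1 H2; have := geo_eq c k; rewrite H1 subrr => /eqP.
by rewrite mulf_eq0 subr_eq0 (negbTE H2) orbF => /eqP.
Qed.

Lemma rho_nseq w k : rho (flatten (nseq k w)) = mpow (rho w) k.
Proof. by elim: k => [|k IH] //=; rewrite rho_cat IH. Qed.

Lemma M_comb i j x y :
  (sig i *m sig j) *m (x *: alpha i + y *: alpha j) =
  (x * (Aco i j * Aco j i - 1) + y * Aco i j) *: alpha i + (- (x * Aco j i) - y) *: alpha j.
Proof.
rewrite -mulmxA.
do ![rewrite mulmxDr | rewrite mulmxBr | rewrite mulmxN | rewrite -scalemxAr | rewrite sig_alpha].
rewrite !Aco_ii.
move: (alpha i) (alpha j) (Aco i j) (Aco j i) => P Q a b.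
apply/matrixP => r c; rewrite !mxE; ring.
Qed.

Lemma odd_rel i j k (l : algC) : (0 < k)%N -> l ^+ k = 1 -> l != 1 -> l ^+ 2 != 1 ->
  Aco i j != 0 -> Aco i j * Aco j i = 2 + l + l^-1 ->
  mpow (sig i *m sig j) k = 1%:M.
Proof.
move=> k0 Hk Hl1 Hl2 Ha Hab.
have l0 : l != 0.
  apply/eqP => Hl; move: Hk; rewrite Hl expr0n gtn_eqF // => /eqP.
  by rewrite eq_sym oner_eq0.
set mu := l^-1 in Hab *.
have lmu : l * mu = 1 by rewrite mulfV.
have mul : mu * l = 1 by rewrite mulrC.
have muk : mu ^+ k = 1 by rewrite exprVn Hk invr1.
have mu1 : mu != 1.
  by apply: contraNneq Hl1 => H; rewrite -[l]invrK -/mu H invr1.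
have lmu0 : l - mu != 0.
  apply: contraNneq Hl2 => /eqP; rewrite subr_eq0 => /eqP H.
  by rewrite expr2 {2}H lmu.
set M := sig i *m sig j.
set w1 := Aco i j *: alpha i + (- (1 + mu)) *: alpha j.
set w2 := Aco i j *: alpha i + (- (1 + l)) *: alpha j.
have Mw1 : M *m w1 = l *: w1.
  rewrite /M /w1 M_comb scalerDr !scalerA; congr (_ *: _ + _ *: _).
    by rewrite Hab; ring.
  rewrite Hab; transitivity (- (1 + l)); first by ring.
  by rewrite mulrN mulrDr mulr1 lmu addrC.
have Mw2 : M *m w2 = mu *: w2.
  rewrite /M /w2 M_comb scalerDr !scalerA; congr (_ *: _ + _ *: _).
    by rewrite Hab; ring.
  rewrite Hab; transitivity (- (1 + mu)); first by ring.
  by rewrite mulrN mulrDr mulr1 mul addrC.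
set G := gsum M k.
have Gw1 : G *m w1 = 0 by rewrite /G (gsum_eig _ Mw1) geo0 // scale0r.
have Gw2 : G *m w2 = 0 by rewrite /G (gsum_eig _ Mw2) geo0 // scale0r.
have Gaj : G *m alpha j = 0.
  have : (l - mu) *: (G *m alpha j) = 0.
    rewrite scalemxAr.
    have -> : (l - mu) *: alpha j = w1 - w2.
      rewrite /w1 /w2; move: (alpha i) (alpha j) (Aco i j) => P Q a.
      apply/matrixP => r c; rewrite !mxE; ring.
    by rewrite mulmxBr Gw1 Gw2 subrr.
  by move/eqP; rewrite scaler_eq0 (negbTE lmu0) /= => /eqP.
have Gai : G *m alpha i = 0.
  have : Aco i j *: (G *m alpha i) = 0.
    rewrite scalemxAr.
    have -> : Aco i j *: alpha i = w1 - (- (1 + mu)) *: alpha j by rewrite /w1 addrK.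
    by rewrite mulmxBr Gw1 -scalemxAr Gaj scaler0 subrr.
  by move/eqP; rewrite scaler_eq0 (negbTE Ha) /= => /eqP.
have GM : G *m M = G.
  have Gs p : G *m alpha p = 0 -> G *m sig p = G.
    by move=> H; rewrite /sig mulmxBr mulmx1 mulmxA H mul0mx subr0.
  by rewrite /M mulmxA !Gs.
apply: subr0_eq; rewrite -gsum_pow -/G mulmxBr GM mulmx1 subrr //.
Qed.


Lemma sig_mul p q : sig p *m sig q =
  1%:M - alpha p *m fr p - alpha q *m fr q + (alpha p *m fr p) *m (alpha q *m fr q).
Proof.
rewrite /sig mulmxBr mulmx1 !mulmxBl !mul1mx.
move: (alpha p *m fr p) (alpha q *m fr q) => X Y.
by rewrite opprB addrA addrAC.
Qed.

Lemma XY0 p q : Aco p q = 0 -> (alpha p *m fr p) *m (alpha q *m fr q) = 0.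
Proof.
by move=> H; rewrite mulmxA -(mulmxA (alpha p)) fr_alpha H mul_mx_scalar scale0r mul0mx.
Qed.

Lemma even_rel i j q : Aco i j = 0 -> Aco j i = 0 ->
  mpow (sig i *m sig j) q.*2 = 1%:M.
Proof.
move=> H1 H2.
have C : sig i *m sig j = sig j *m sig i.
  by rewrite !sig_mul !XY0 // !addr0 -!addrA (addrC (- _)).
have MM : (sig i *m sig j) *m (sig i *m sig j) = 1%:M.
  by rewrite {2}C mulmxA -(mulmxA (sig i)) sig2 mulmx1 sig2.
elim: q => [|q IH] //=.
by rewrite mulmxA MM mul1mx.
Qed.

Hypothesis Hm : coxeter_matrix m.

Lemma cval_neq0 k : (k.-1.+1 >= 3)%N -> cval k != 0.
Proof.
move=> Hk.
have P := lamP k; set l := lam k in P *.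
have l0 : l != 0.
  apply/eqP => Hl; move: (prim_expr_order P); rewrite Hl expr0n /= => /eqP.
  by rewrite eq_sym oner_eq0.
have l2 : l ^+ 2 != 1.
  by rewrite -(prim_order_dvd P); apply/negP => /(dvdn_leq (isT : (0 < 2)%N)); rewrite leqNgt Hk.
rewrite /cval -/l; apply: contraNneq l2 => H.
have H2 : (l + 1) ^+ 2 = 0.
  transitivity (l * (2 + l + l^-1)); last by rewrite H mulr0.
  by rewrite !mulrDr mulfV //; ring.
move: H2 => /eqP; rewrite expf_eq0 /= addr_eq0 => /eqP ->.
by rewrite sqrrN expr1n.
Qed.

Lemma rho_rel l r : cox_rel m l r -> rho l = rho r.
Proof.
case=> i [j [k [Hij [-> ->]]]] /=.
rewrite rho_nseq /= mulmx1.
move: Hij; case: (eqVneq i j) => [<-|Hne] Hij.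
  by move: Hij; rewrite (Hm.2.1 i) => [[<-]] /=; rewrite mulmx1 sig2.
have k2 := Hm.2.2 i j k Hne Hij.
have Hji : m j i = Some k by rewrite Hm.1.
have Aij : Aco i j = if odd k then (if (i < j)%N then 1 else cval k) else 0.
  by rewrite /Aco (negbTE Hne) Hij.
have Aji : Aco j i = if odd k then (if (j < i)%N then 1 else cval k) else 0.
  by rewrite /Aco eq_sym (negbTE Hne) Hji.
case: (boolP (odd k)) => Ho; last first.
  have [q Eq] : exists q, k = q.*2 by exists k./2; rewrite even_halfK.
  rewrite Eq.
  by apply: even_rel; rewrite ?Aij ?Aji (negbTE Ho).
have k3 : (3 <= k)%N by rewrite ltn_neqAle k2 andbT; apply: contraTneq Ho => <-.
have kk : k.-1.+1 = k by rewrite prednK // (leq_trans _ k3).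
have P := lamP k; rewrite kk in P.
apply: (@odd_rel _ _ _ (lam k)).
- by rewrite (leq_trans _ k3).
- exact: prim_expr_order.
- by rewrite -(expr1 (lam k)) -(prim_order_dvd P) dvdn1 gtn_eqF // (leq_trans _ k3).
- rewrite -(prim_order_dvd P); apply/negP => /(dvdn_leq (isT : (0 < 2)%N)); rewrite leqNgt.
  by rewrite k3.
- rewrite Aij Ho; case: ifP => _; first exact: oner_neq0.
  by apply: cval_neq0; rewrite kk.
- rewrite Aij Aji Ho; case: (ltngtP i j) => H; rewrite ?mul1r ?mulr1 //.
  by move: Hne; rewrite (val_inj H) eqxx.
Qed.

Lemma rho_eq u v : cox_eq m u v -> rho u = rho v.
Proof.
elim=> {u v} //.
- by move=> u v w _ -> _ ->.
- by move=> u v x b; rewrite !rho_cat /= (mulmxA (sig x)) sig2 mul1mx.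
- by move=> u v l r Hr; rewrite !rho_cat (rho_rel Hr).
Qed.


Lemma rho_inv x : rho x *m rho (finv x) = 1%:M.
Proof.
elim: x => [|p x IH] /=; first by rewrite mulmx1.
rewrite finv_cons rho_cat /= mulmx1 -mulmxA (mulmxA (rho x)) IH mul1mx sig2 //.
Qed.

Lemma rank_refl t : is_refl m t -> (\rank (1%:M - rho t)%R <= 1)%N.
Proof.
case=> x [i Hx]; rewrite -(rho_eq Hx).
have E : 1%:M - rho (x ++ (i, true) :: finv x) = (rho x *m alpha i) *m (fr i *m rho (finv x)).
  rewrite rho_cat /= -{1}(rho_inv x) /sig mulmxBl mul1mx mulmxBr opprB addrC subrK.
  by rewrite !mulmxA.
by rewrite E; apply: leq_trans (mxrankM_maxl _ _) (rank_leq_col _).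
Qed.

Lemma rank_sub (A B : 'M[algC]_N) :
  (\rank (1%:M - A *m B)%R <= \rank (1%:M - A)%R + \rank (1%:M - B)%R)%N.
Proof.
have -> : 1%:M - A *m B = (1%:M - A) + A *m (1%:M - B).
  by rewrite mulmxBr mulmx1 addrA subrK.
apply: leq_trans (mxrank_add _ _) _.
by rewrite leq_add2l mxrankM_maxr.
Qed.

Lemma rank_T ts : allrefl m ts -> (\rank (1%:M - rho (flatten ts))%R <= size ts)%N.
Proof.
elim: ts => [|t ts IH] /=; first by rewrite subrr mxrank0.
case/allrefl_cons => H1 H2.
rewrite rho_cat; apply: leq_trans (rank_sub _ _) _.
by rewrite -add1n leq_add // ?rank_refl // IH.
Qed.


Definition Arow (i : 'I_n) : 'rV[algC]_n := \row_j Aco i j.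

Lemma sig_block i : sig i =
  block_mx (1%:M - delta_mx i 0 *m Arow i) (- delta_mx i i) 0 1%:M.
Proof.
rewrite /sig /alpha /fr mul_col_row !mul0mx mul_delta_mx (scalar_mx_block n n 1).
by rewrite opp_block_mx add_block_mx !oppr0 !addr0 add0r.
Qed.

Lemma block_mul (X Y X' Y' : 'M[algC]_n) :
  block_mx X Y 0 1%:M *m block_mx X' Y' 0 1%:M = block_mx (X *m X') (X *m Y' + Y) 0 1%:M.
Proof.
rewrite mulmx_block !mulmx0 !mul0mx !mulmx1 !addr0 add0r.
done.
Qed.

Definition Pr r (X Y : 'M[algC]_n) :=
  [/\ forall j k : 'I_n, (r <= k)%N -> Y j k = 0,
      forall j k : 'I_n, (k < r)%N -> (k < j)%N -> Y j k = 0,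
      forall k : 'I_n, (k < r)%N -> Y k k = -1 &
      forall j l : 'I_n, (r <= l)%N -> (r <= j)%N -> X j l = (j == l)%:R].

Definition pref r := rho (map (fun i => (i, true)) (take r (enum 'I_n))).

Lemma entry1 (X : 'M[algC]_n) (r : 'I_n) j l :
  (X *m (1%:M - delta_mx r 0 *m Arow r)) j l = X j l - X j r * Aco r l.
Proof.
rewrite mulmxBr mulmx1 mulmxA -colE !mxE big_ord1 !mxE //.
Qed.

Lemma entry2 (X Y : 'M[algC]_n) (r : 'I_n) j k :
  (X *m (- delta_mx r r) + Y) j k = Y j k - X j r * (k == r)%:R.
Proof.
rewrite mulmxN -(mul_delta_mx (0 : 'I_1)) mulmxA -colE !mxE big_ord1 !mxE /=.
by rewrite addrC.
Qed.


Lemma pref_block r : (r <= n)%N -> exists X Y, pref r = block_mx X Y 0 1%:M /\ Pr r X Y.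
Proof.
elim: r => [|r IH] Hr.
  exists 1%:M, 0; split; first by rewrite /pref take0 /= (scalar_mx_block n n 1).
  by split => [j k _|j k //|k //|j l _ _]; rewrite !mxE.
have Hr' : (r < n)%N by [].
have [X [Y [E [P1 P2 P3 P4]]]] := IH (ltnW Hr').
set o := Ordinal Hr'.
have Ho : nth o (enum 'I_n) r = o by apply: val_inj; rewrite /= nth_enum_ord.
have -> : pref r.+1 = pref r *m sig o.
  by rewrite /pref (take_nth o) ?size_enum_ord // Ho -cats1 map_cat rho_cat /= mulmx1.
rewrite E sig_block block_mul.
exists (X *m (1%:M - delta_mx o 0 *m Arow o)), (X *m - delta_mx o o + Y); split => //.
split.
- move=> j k Hk; rewrite entry2 P1 ?(ltnW Hk) //.
  have -> : (k == o) = false by apply/negP => /eqP Hko; move: Hk; rewrite Hko /= ltnn.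
  by rewrite mulr0 subrr.
- move=> j k Hk Hkj; rewrite entry2.
  case: (eqVneq k o) => [Hko|Hko].
    rewrite Hko P1 // P4 //=; last by move: Hkj; rewrite Hko /= => /ltnW.
    have -> : (j == o) = false by apply/negP => /eqP Hjo; move: Hkj; rewrite Hjo Hko ltnn.
    by rewrite mul0r subrr.
  have Hk' : (k < r)%N.
    by move: Hk Hko; rewrite ltnS leq_eqVlt => /orP [/eqP Hk|//]; rewrite -(inj_eq val_inj) /= Hk eqxx.
  by rewrite P2 // mulr0 subrr.
- move=> k Hk; rewrite entry2.
  case: (eqVneq k o) => [Hko|Hko].
    by rewrite Hko P1 // P4 //= eqxx mulr1 sub0r.
  have Hk' : (k < r)%N.
    by move: Hk Hko; rewrite ltnS leq_eqVlt => /orP [/eqP Hk|//]; rewrite -(inj_eq val_inj) /= Hk eqxx.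
  by rewrite P3 // mulr0 subr0.
- move=> j l Hl Hj; rewrite entry1 P4 ?(ltnW Hl) ?(ltnW Hj) //.
  rewrite [X j o]P4 //=; last exact: ltnW.
  have -> : (j == o) = false by apply/negP => /eqP Hjo; move: Hj; rewrite Hjo /= ltnn.
  by rewrite mul0r subr0.
Qed.

Lemma rank_h : (n <= \rank (1%:M - rho (cox_h n))%R)%N.
Proof.
have [X [Y [E [P1 P2 P3 P4]]]] := pref_block (leqnn n).
have Eh : rho (cox_h n) = pref n by rewrite /pref take_oversize ?size_enum_ord.
set L : 'M[algC]_(n, N) := row_mx 1%:M 0.
set Rr : 'M[algC]_(N, n) := col_mx 0 1%:M.
have EY : L *m (1%:M - rho (cox_h n)) *m Rr = - Y.
  rewrite Eh E (scalar_mx_block n n 1) opp_block_mx add_block_mx /L /Rr.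
  rewrite mul_row_block mul_row_col !mul1mx !mul0mx !addr0 !mulmx0 mulmx1.
  by rewrite !add0r.
have : (\rank (- Y) <= \rank (1%:M - rho (cox_h n))%R)%N.
  by rewrite -EY; apply: leq_trans (mxrankM_maxl _ _) (mxrankM_maxr _ _).
apply: leq_trans.
rewrite mxrank_opp mxrank_unit // unitmxE -det_tr det_trig.
  rewrite unitfE; apply/prodf_neq0 => i _; rewrite mxE P3 //.
  by rewrite oppr_eq0 oner_neq0.
apply/forallP => i; apply/forallP => j; apply/implyP => Hij.
by rewrite mxE P2 //.
Qed.

Lemma KL ts : T_decomp m (cox_h n) ts -> (n <= size ts)%N.
Proof.
case=> H1 H2.
apply: leq_trans rank_h _.
by rewrite -(rho_eq H2); apply: rank_T.
Qed.

End Rep.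

Theorem proposition3p8 (n : nat) (m : 'I_n -> 'I_n -> option nat) :
  coxeter_matrix m -> psi_iso m -> well_stabilized m.
Proof.
move=> Hm [Hinj _] beta Hb.
have KLh := KL Hm.
split.
- case=> Hsz Hk; split => // k Hk'.
  have [gs [HF Hg]] := hact_inv KLh Hb.
  have [g [Hc Hd]] := F2_nth HF Hk'.
  have Hkn : k < n by move: Hk'; rewrite Hsz size_map size_enum_ord.
  set o := Ordinal Hkn.
  have So : nth [::] (sgen n) k = [:: (o, true)] by exact: (nth_sgen o).
  rewrite So.
  apply: (Hinj _ _ (psimap KLh (nth [::] (hact beta (sgen n)) k)) (psimap KLh [:: (o, true)])).
  + exact: psi_psimap.
  + exact: psi_psimap.
  apply: pres_trans Hd _.
  have R : @dual_rel n m [:: (g, true)] [:: (gi KLh o, true)].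
    left; exists g, (gi KLh o); split => //.
    by apply: pres_trans Hc _; move: (Hk k Hk'); rewrite So.
  exact: (pres_rel [::] [::] R).
- case=> Hsz Hk; split => // k Hk'.
  exact: (art_cox Hm (Hk k Hk')).
Qed.
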